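(* Let $t$ be a positive integer, $\mathbf v$ a good vector with respect to $t$, and $n=4t+1$ if $|\mathbf v|=2t$, $n=4t+2$ if $|\mathbf v|=2t+1$. Let $k$ be a positive integer such that $2k\le 2t+\Delta+\lceil k/\Delta\rceil$ for every $\Delta\in[k]$. Then the code $\mathcal C$ of Construction C built from $\mathbf v$ is an $(n,(t+1)n,k,n)$-BAC over $\mathbb{F}_q$.
   Context: Fix a finite field $\mathbb{F}_q$. Good vector: for a positive integer $t$, $\mathbf v=(v_1,\dots,v_{2t})\in[t]^{2t}$ or $\mathbf v\in\{0,\dots,t\}^{2t+1}$ is good w.r.t. $t$ if every $j\in[t]$ appears exactly twice in $\mathbf v$ and whenever $v_i=v_{i'}=j\in[t]$ with $i<i'$ then $i'-i=j$; for $j\in[t]$ let $j(\mathbf v)=\max\{i:v_i=j\}$. Construction C: indices modulo $n$ with representatives in $[n]$; for $\mathbf x\in\mathbb{F}_q^n$, $i\in[n]$, $j\in[t]$ put $y_{i,j}=x_{i-t-j(\mathbf v)}+x_{i-t-j(\mathbf v)+j}$ and $\mathcal C(\mathbf x)=(\mathbf c_1,\dots,\mathbf c_n)$ with $\mathbf c_i=(x_i,y_{i,1},\dots,y_{i,t})$. An $(n,N,k,m)$-batch array code (BAC) over $\mathbb{F}_q$ is an $\mathbb{F}_q$-linear map $\mathbf x\mapsto(\mathbf c_1,\dots,\mathbf c_m)$ with buckets $\mathbf c_\ell\in\mathbb{F}_q^{N_\ell}$, $N_\ell\ge1$ independent of $\mathbf x$, $\sum_\ell N_\ell=N$, such that for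 every multiset $\{\{i_1,\dots,i_k\}\}$ of elements of $[n]$ there is a partition of $[m]$ into $k$ sets $R_1,\dots,R_k$ such that for each $j\in[k]$, $x_{i_j}$ is an $\mathbb{F}_q$-linear combination of values $f_\ell(\mathbf c_\ell)$, $\ell\in R_j$, for some linear functionals $f_\ell$ (independent of $\mathbf x$). *)

(* Defs.v *)
From HB Require Import structures.
From mathcomp Require Import all_boot all_order all_algebra all_field.
Set Implicit Arguments. Unset Strict Implicit. Unset Printing Implicit Defensive.
Import Order.TTheory GRing.Theory Num.Theory.
Local Open Scope ring_scope.

(* Good vector w.r.t. t.  v is a sequence (v_1,...,v_L), stored 0-based:
   v_i = nth 0 v (i-1). *)
Definition good_vector (t : nat) (v : seq nat) : Prop :=
  ((size v = 2 * t)%N /\ all (fun a => (1 <= a <= t)%N) v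
   \/ (size v = (2 * t).+1)%N /\ all (fun a => (a <= t)%N) v) /\
  (forall j : nat, (1 <= j <= t)%N -> count_mem j v = 2%N) /\
  (forall (j i i' : nat), (1 <= j <= t)%N -> (i < i' < size v)%N ->
     nth 0%N v i = j -> nth 0%N v i' = j -> (i' - i)%N = j).

(* j(v) = max{ i : v_i = j }, with 1-based positions i. *)
Definition jpos (v : seq nat) (j : nat) : nat :=
  \max_(i < size v | nth 0%N v i == j) i.+1.

Definition nC (t : nat) (v : seq nat) : nat :=
  if size v == (2 * t)%N then (4 * t).+1 else (4 * t).+2.

(* Coordinates are stored
   0-based: x_{a} (1-based, reduced into [n]) corresponds to entry
   ((a - 1) mod n) of the row vector; callers pass the 0-based integer. *)
Definition xat (F : fieldType) (n : nat) (x : 'rV[F]_n) (a : int) : F :=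
  nth 0 [seq x 0 i | i <- enum 'I_n] `|(a %% n%:Z)%Z|%N.

(* Construction C.  Bucket i (0-based, i.e. the paper's i+1) is
   c = (x_i, y_{i,1}, ..., y_{i,t}) with
   y_{i,j} = x_{i-t-j(v)} + x_{i-t-j(v)+j}  (indices mod n). *)
Definition yC (F : fieldType) (t : nat) (v : seq nat) (x : 'rV[F]_(nC t v))
    (i : nat) (j : nat) : F :=
  xat x (i%:Z - t%:Z - (jpos v j)%:Z) + xat x (i%:Z - t%:Z - (jpos v j)%:Z + j%:Z).

Definition constructionC (F : fieldType) (t : nat) (v : seq nat)
    (x : 'rV[F]_(nC t v)) (l : 'I_(nC t v)) : 'rV[F]_t.+1 :=
  \row_(s < t.+1) (if s == ord0 then x 0 l else yC x l s).

(* (n, N, k, m)-batch array code over F: an F-linear map x |-> (c_1..c_m)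
   with bucket c_l in F^{Ns l}, Ns l >= 1, sum Ns = N, such that for every
   multiset {{i_1..i_k}} of [n] (given as a k-tuple idx) there is a
   partition of [m] into k sets R_1..R_k (part l = the block containing l)
   and linear functionals f_l (given by coefficient vectors) such that each
   x_{i_j} is an F-linear combination (coefficients a) of f_l(c_l), l in R_j. *)
Definition is_BAC (F : fieldType) (n N k m : nat) (Ns : 'I_m -> nat)
    (C : 'rV[F]_n -> forall l : 'I_m, 'rV[F]_(Ns l)) : Prop :=
  (forall l, (0 < Ns l)%N) /\
  (\sum_(l < m) Ns l)%N = N /\
  (forall (a : F) (x y : 'rV[F]_n) (l : 'I_m),
      C (a *: x + y) l = a *: C x l + C y l) /\
  (forall idx : 'I_k -> 'I_n,
     exists part : 'I_m -> 'I_k,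
     exists f : forall l : 'I_m, 'rV[F]_(Ns l),
     exists a : 'I_k -> 'I_m -> F,
     forall (j : 'I_k) (x : 'rV[F]_n),
       x 0 (idx j) = \sum_(l < m | part l == j)
                        a j l * (\sum_(s < Ns l) f l 0 s * C x l 0 s)).

Definition ceil_div (a b : nat) : nat := ((a + b.-1) %/ b)%N.

(* Main.v *)
Require Import Defs.
From HB Require Import structures.
From mathcomp Require Import all_boot all_order all_algebra all_field.
From mathcomp Require Import zify.
Set Implicit Arguments. Unset Strict Implicit. Unset Printing Implicit Defensive.
Import GRing.Theory.

Lemma card_bigcup_le (I T : finType) (P : pred I) (F : I -> {set T}) :
  #|\bigcup_(i | P i) F i| <= \sum_(i | P i) #|F i|.
Proof.
apply: (big_ind2 (fun (A : {set T}) (n : nat) => #|A| <= n)) => //.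
- by rewrite cards0.
- move=> A1 n1 A2 n2 h1 h2; rewrite cardsU.
  apply: leq_trans (leq_subr _ _) _; exact: leq_add.
Qed.

Lemma meet_card (N T : nat) (S : 'I_T -> {set 'I_N}) (W : {set 'I_N}) (d : 'I_N) :
  (forall s s', s != s' -> [disjoint S s & S s']) ->
  #|[set s | ~~ [disjoint S s & W]]| <= #|W|.
Proof.
move=> dis.
pose g s := odflt d [pick x in S s :&: W].
have gP s : s \in [set s | ~~ [disjoint S s & W]] -> g s \in S s :&: W.
  rewrite inE /g; case: pickP => [x //|H].
  move=> /negP; case; rewrite -setI_eq0; apply/eqP/setP=> x.
  by rewrite H inE.
rewrite -(@card_in_imset _ _ g); last first.
  move=> s s' Hs Hs' E; apply/eqP; apply: contraT => ne.
  have := dis s s' ne; have := gP s Hs; have := gP s' Hs'.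
  rewrite !inE E => /andP[h1 _] /andP[h2 _] /disjointFr => /(_ _ h2).
  by rewrite h1.
apply: subset_leq_card; apply/subsetP => x /imsetP [s Hs ->].
by have := gP s Hs; rewrite inE => /andP[].
Qed.

Lemma greedy_base (N T : nat) (S : 'I_N -> 'I_T -> {set 'I_N}) (s0 : 'I_T)
  (cnt : 'I_N -> nat) :
  (forall a, S a s0 = [set a]) -> (forall a, cnt a <= 1) ->
  exists Sel : 'I_N -> {set 'I_T},
    [/\ forall a, #|Sel a| = cnt a, forall a, 0 < cnt a -> s0 \in Sel a &
    forall a b s s', s \in Sel a -> s' \in Sel b -> (a != b) || (s != s') ->
      [disjoint S a s & S b s']].
Proof.
move=> S0 c1.
exists (fun a => if 0 < cnt a then [set s0] else set0); split.
- move=> a; move: (c1 a); case: (cnt a) => [|[|n]] //= _.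
  + by rewrite cards0.
  + by rewrite cards1.
- by move=> a ->; rewrite set11.
- move=> a b s s'; case: ifP => _; last by rewrite inE.
  case: ifP => _; last by move=> _; rewrite inE.
  rewrite !inE => /eqP -> /eqP ->; rewrite eqxx orbF => ab.
  by rewrite !S0 disjoints1 inE.
Qed.

Lemma greedy (N T : nat) (S : 'I_N -> 'I_T -> {set 'I_N}) (s0 : 'I_T) :
  (forall a, S a s0 = [set a]) ->
  (forall a s, #|S a s| <= 2) ->
  (forall a s s', s != s' -> [disjoint S a s & S a s']) ->
  forall K (cnt : 'I_N -> nat), \sum_a cnt a = K ->
  2 * K <= T.-1 + #|[set a | 0 < cnt a]| + \max_a cnt a ->
  exists Sel : 'I_N -> {set 'I_T},
    [/\ forall a, #|Sel a| = cnt a, forall a, 0 < cnt a -> s0 \in Sel a &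
    forall a b s s', s \in Sel a -> s' \in Sel b -> (a != b) || (s != s') ->
      [disjoint S a s & S b s']].
Proof.
move=> S0 S2 Sdis K; elim: K => [|K IH] cnt Hsum Hbd.
  apply: greedy_base => // a.
  have : cnt a <= \sum_a cnt a by rewrite (bigD1 a) //= leq_addr.
  by rewrite Hsum; case: (cnt a).
have cN : 0 < #|'I_N|.
  rewrite card_ord; case: (posnP N) => // N0; subst N.
  by move: Hsum; rewrite big_ord0.
have [am Has] := eq_bigmax cnt cN.
have lemax a : cnt a <= cnt am by rewrite -Has; exact: leq_bigmax.
case: (leqP (cnt am) 1) => Hr.
  by apply: greedy_base => // a; exact: leq_trans (lemax a) Hr.
pose cnt' : 'I_N -> nat := fun a => if a == am then (cnt am).-1 else cnt a.
have Hrest : \sum_(b | b != am) cnt' b = \sum_(b | b != am) cnt b.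
  by apply: eq_bigr => b /negbTE; rewrite /cnt' => ->.
have Hsum' : \sum_a cnt' a = K.
  move: Hsum; rewrite (bigD1 am) //= => Hs.
  rewrite (bigD1 am) //= Hrest /cnt' eqxx; set X := \sum_(i | i != am) cnt i; move: Hs; rewrite -/X; lia.
have Hm' : [set a | 0 < cnt' a] = [set a | 0 < cnt a].
  apply/setP => a; rewrite !inE /cnt'; case: eqP => [->|] //; lia.
have Hmax' : (cnt am).-1 <= \max_a cnt' a.
  by have := @leq_bigmax _ cnt' am; rewrite /cnt' eqxx.
have [Sel' [Hc' H0' Hd']] : exists Sel : 'I_N -> {set 'I_T},
    [/\ forall a, #|Sel a| = cnt' a, forall a, 0 < cnt' a -> s0 \in Sel a &
    forall a b s s', s \in Sel a -> s' \in Sel b -> (a != b) || (s != s') ->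
      [disjoint S a s & S b s']].
  apply: IH => //; rewrite Hm'; move: Hbd; rewrite Has; lia.
pose Uo := \bigcup_(b | b != am) \bigcup_(s in Sel' b) S b s.
have HUo : #|Uo| + \sum_(b | b != am) (0 < cnt b : nat)
           <= 2 * \sum_(b | b != am) cnt b.
  apply: leq_trans (leq_add (card_bigcup_le _ _) (leqnn _)) _.
  rewrite -big_split /= big_distrr /=; apply: leq_sum => b bas.
  have cb : cnt b = #|Sel' b| by rewrite Hc' /cnt' (negbTE bas).
  apply: leq_trans (leq_add (card_bigcup_le _ _) (leqnn _)) _.
  rewrite cb; case: (posnP #|Sel' b|) => [/cards0_eq ->|pos].
    by rewrite big_set0.
  have s0in : s0 \in Sel' b by apply: H0'; rewrite /cnt' (negbTE bas) cb.
  rewrite (big_setD1 _ s0in) /= S0 cards1 (cardsD1 s0 (Sel' b)) s0in.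
  have : \sum_(i in Sel' b :\ s0) #|S b i| <= \sum_(i in Sel' b :\ s0) 2.
    by apply: leq_sum => i _; exact: S2.
  rewrite sum_nat_const /=; apply: (fun X c (h : X <= c * 2) => (_ : 1 + X + 1 <= 2 * (1 + c))); lia.
have Hsupp : \sum_b (0 < cnt b : nat) = #|[set a | 0 < cnt a]|.
  rewrite -sum1dep_card [RHS]big_mkcond /=; apply: eq_bigr => b _.
  by case: (0 < cnt b).
have ascnt : 0 < cnt am by lia.
move: Hsupp; rewrite (bigD1 am) //= ascnt => Hsupp.
move: Hsum; rewrite (bigD1 am) //= => Hsum.
pose Bad := Sel' am :|: [set s | ~~ [disjoint S am s & Uo]].
have HB : #|Bad| < #|'I_T|.
  have h1 := @meet_card _ _ (S am) Uo am (Sdis am).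
  have h2 : #|Sel' am| = (cnt am).-1 by rewrite Hc' /cnt' eqxx.
  have h3 : #|Bad| <= #|Sel' am| + #|Uo|.
    rewrite cardsU; apply: leq_trans (leq_subr _ _) _; exact: leq_add.
  rewrite card_ord; move: h3 HUo Hsupp Hsum Hbd; rewrite h2 Has.
  move: #|Bad| #|Uo| (\sum_(b | b != am) (0 < cnt b : nat)) (\sum_(b | b != am) cnt b).
  move: #|[set a | 0 < cnt a]| => *; lia.
have [s sB] : exists s, s \in ~: Bad.
  apply/set0Pn; rewrite -card_gt0; move: HB (cardsC Bad); move: #|Bad| #|~: Bad| #|'I_T| => *; lia.
move: sB; rewrite !inE negb_or negbK => /andP[sSel sU].
pose Sel a := if a == am then s |: Sel' am else Sel' a.
have SelP a x : x \in Sel a -> (a == am) && (x == s) \/ x \in Sel' a.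
  rewrite /Sel; case: eqP => [->|_] //; last by right.
  by case/setU1P => [->|]; [left; rewrite !eqxx | right].
have Lnew b y : y \in Sel' b -> [disjoint S am s & S b y].
  move=> yb; case: (eqVneq b am) => [eb|nb].
    subst b; apply: Sdis; apply: contraNneq sSel => ->; exact: yb.
  apply: (disjointWr _ sU); rewrite /Uo; apply: subset_trans (bigcup_sup b nb).
  exact: (bigcup_sup y yb).
exists Sel; split.
- move=> a; rewrite /Sel; case: eqP => [->|ne].
    by rewrite cardsU1 sSel Hc' /cnt' eqxx; lia.
  by rewrite Hc' /cnt'; case: eqP.
- move=> a ca; rewrite /Sel; case: eqP => [E|ne].
    apply: setU1r; apply: H0'; rewrite /cnt' eqxx; lia.
  by apply: H0'; rewrite /cnt'; case: eqP.
- move=> a b x y /SelP [/andP[/eqP -> /eqP ->]|xa] /SelP [/andP[/eqP -> /eqP ->]|yb].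
  + by rewrite !eqxx.
  + by move=> _; exact: Lnew.
  + by move=> _; rewrite disjoint_sym; exact: Lnew.
  + exact: Hd'.
Qed.

Lemma bridge (N T k : nat) (S : 'I_N -> 'I_T -> {set 'I_N}) (s0 : 'I_T)
  (idx : 'I_k -> 'I_N) (Sel : 'I_N -> {set 'I_T}) :
  (forall a, #|Sel a| = #|[set j | idx j == a]|) ->
  (forall a b s s', s \in Sel a -> s' \in Sel b -> (a != b) || (s != s') ->
      [disjoint S a s & S b s']) ->
  exists sel : 'I_k -> 'I_T, forall j j', j != j' ->
    [disjoint S (idx j) (sel j) & S (idx j') (sel j')].
Proof.
move=> Hc Hd.
pose J a := enum [set j | idx j == a].
pose sel j := nth s0 (enum (Sel (idx j))) (index j (J (idx j))).
have ltJ j : index j (J (idx j)) < size (enum (Sel (idx j))).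
  by rewrite -cardE Hc cardE index_mem mem_enum inE.
have selP j : sel j \in Sel (idx j) by rewrite -mem_enum mem_nth.
exists sel => j j' ne; apply: Hd; try exact: selP.
case: (eqVneq (idx j) (idx j')) => [E|] //=.
apply/negP => /eqP E2; move: E2; rewrite /sel -E.
move/eqP; rewrite nth_uniq ?enum_uniq //; last by rewrite E.
move=> /eqP Ei.
have : nth j (J (idx j)) (index j (J (idx j))) = nth j (J (idx j)) (index j' (J (idx j))) by rewrite Ei.
rewrite !nth_index ?mem_enum ?inE ?E //.
by move=> jj; move: ne; rewrite jj eqxx.
Qed.

Lemma nC_size t v : good_vector t v -> nC t v = (2 * t + size v).+1.
Proof.
case=> [[[E _]|[E _]] _]; rewrite /nC E.
  by rewrite eqxx; lia.
case: eqP => /= H; lia.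
Qed.

Lemma jpos_facts t v j : good_vector t v -> (1 <= j <= t)%N ->
  [/\ j < jpos v j, jpos v j <= size v, nth 0%N v (jpos v j).-1 = j
    & nth 0%N v (jpos v j - j).-1 = j].
Proof.
move=> [_ [Hc Hd]] hj.
pose P := [seq p <- iota 0 (size v) | nth 0%N v p == j].
have sP : size P = 2.
  rewrite size_filter -(Hc j hj) -{3}(mkseq_nth 0%N v) /mkseq count_map.
  by apply: eq_count => p /=; rewrite eq_sym.
have srt : sorted ltn P by apply: sorted_filter => //; [exact: ltn_trans | exact: iota_ltn_sorted].
have memP p : (p \in P) = (p < size v) && (nth 0%N v p == j).
  by rewrite mem_filter mem_iota /= andbC.
case EP: P sP srt memP => [|p1 [|p2 [|]]] // _ srt memP.
have lt12 : p1 < p2 by move: srt; rewrite /= andbT.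
have /andP[h1s /eqP h1v] : (p1 < size v) && (nth 0%N v p1 == j).
  by rewrite -memP !inE eqxx.
have /andP[h2s /eqP h2v] : (p2 < size v) && (nth 0%N v p2 == j).
  by rewrite -memP !inE eqxx orbT.
have d12 : (p2 - p1 = j)%N by apply: (Hd j) => //; rewrite lt12 h2s.
have Ejpos : jpos v j = p2.+1.
  apply/eqP; rewrite eqn_leq; apply/andP; split.
    apply/bigmax_leqP => i /eqP hi.
    have := memP i; rewrite hi eqxx ltn_ord !inE => /orP[] /eqP -> //.
    exact: ltnW.
  rewrite /jpos; apply: (@leq_bigmax_cond _ (fun i : 'I_(size v) => nth 0%N v i == j) (fun i : 'I_(size v) => i.+1) (Ordinal h2s)); exact/eqP.
rewrite Ejpos /=; split => //.
- lia.
- by have -> : (p2.+1 - j).-1 = p1 by lia.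
Qed.

Lemma nC_gt0 t v : 0 < nC t v.
Proof. by rewrite /nC; case: ifP. Qed.

Definition ordm t v (m : nat) : 'I_(nC t v) := Ordinal (ltn_pmod m (nC_gt0 t v)).
Definition jj (s : nat) := (s.+1 %/ 2)%N.
Definition hoff t v (s : nat) :=
  if s == 0 then 0 else if s %% 2 == 1 then t + jpos v (jj s) else t + jpos v (jj s) - jj s.
Definition poff t v (s : nat) :=
  if s == 0 then 0 else if s %% 2 == 1 then jj s else nC t v - jj s.

Lemma off_facts t v s : good_vector t v -> 1 <= s <= 2 * t ->
  [/\ t + 1 <= hoff t v s <= nC t v - t - 1,
      (1 <= poff t v s <= t) || (nC t v - t <= poff t v s < nC t v)
    & nth 0%N v (hoff t v s - t - 1) = jj s].
Proof.
move=> Hg hs.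
have jb : 1 <= jj s <= t by rewrite /jj; lia.
have [f1 f2 f3 f4] := jpos_facts Hg jb.
rewrite /hoff /poff nC_size //.
have -> : (s == 0) = false by lia.
case: ifP => _; split; try lia.
- by have -> : t + jpos v (jj s) - t - 1 = (jpos v (jj s)).-1 by lia.
- by have -> : t + jpos v (jj s) - jj s - t - 1 = (jpos v (jj s) - jj s).-1 by lia.
Qed.

Lemma hoff_inj t v s s' : good_vector t v -> 1 <= s <= 2 * t -> 1 <= s' <= 2 * t ->
  hoff t v s = hoff t v s' -> s = s'.
Proof.
move=> Hg hs hs' E.
have [_ _ n1] := off_facts Hg hs; have [_ _ n2] := off_facts Hg hs'.
have ej : jj s = jj s' by rewrite -n1 -n2 E.
have jb : 1 <= jj s <= t by rewrite /jj; lia.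
have [f1 _ _ _] := jpos_facts Hg jb.
move: E; rewrite /hoff -ej.
have -> : (s == 0) = false by lia.
have -> : (s' == 0) = false by lia.
move: ej f1; rewrite /jj => ej f1.
case: ifP => h1; case: ifP => h2; lia.
Qed.

Lemma poff_inj t v s s' : good_vector t v -> 1 <= s <= 2 * t -> 1 <= s' <= 2 * t ->
  poff t v s = poff t v s' -> s = s'.
Proof.
move=> Hg hs hs'; rewrite /poff nC_size //.
have -> : (s == 0) = false by lia.
have -> : (s' == 0) = false by lia.
rewrite /jj; case: ifP => h1; case: ifP => h2; lia.
Qed.

Lemma off_lt t v s : good_vector t v -> s <= 2 * t ->
  hoff t v s < nC t v /\ poff t v s < nC t v.
Proof.
move=> Hg hs; have n0 := nC_gt0 t v.
case: (posnP s) => [->|sp]; first by rewrite /hoff /poff.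
have [h1 h2 _] := off_facts Hg (ltac:(lia) : 1 <= s <= 2 * t).
lia.
Qed.

Lemma off_hp t v s : good_vector t v -> 1 <= s <= 2 * t -> hoff t v s != poff t v s.
Proof. move=> Hg hs; have [h1 h2 _] := off_facts Hg hs; lia. Qed.

Lemma off_ne t v s s' : good_vector t v -> s <= 2 * t -> s' <= 2 * t -> s != s' ->
  [/\ hoff t v s != hoff t v s', hoff t v s != poff t v s',
      poff t v s != hoff t v s' & poff t v s != poff t v s'].
Proof.
move=> Hg hs hs' ne.
have z0 : hoff t v 0 = 0 /\ poff t v 0 = 0 by rewrite /hoff /poff.
case: (posnP s) => [s0|sp].
  subst s; have [h1 h2 _] := off_facts Hg (ltac:(lia) : 1 <= s' <= 2 * t).
  case: z0 => -> ->; split; lia.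
case: (posnP s') => [s0|sp'].
  subst s'; have [h1 h2 _] := off_facts Hg (ltac:(lia) : 1 <= s <= 2 * t).
  case: z0 => -> ->; split; lia.
have [h1 h2 _] := off_facts Hg (ltac:(lia) : 1 <= s <= 2 * t).
have [h1' h2' _] := off_facts Hg (ltac:(lia) : 1 <= s' <= 2 * t).
have ih : hoff t v s != hoff t v s'.
  by apply/eqP => /(hoff_inj Hg) E; move: ne; rewrite E ?eqxx //; lia.
have ip : poff t v s != poff t v s'.
  by apply/eqP => /(poff_inj Hg) E; move: ne; rewrite E ?eqxx //; lia.
split => //; lia.
Qed.

Lemma ordm_inj t v (a : 'I_(nC t v)) o1 o2 : o1 < nC t v -> o2 < nC t v ->
  ordm t v (a + o1) = ordm t v (a + o2) -> o1 = o2.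
Proof.
move=> h1 h2 /(congr1 val) /= /eqP; rewrite eqn_modDl !modn_small //.
by move/eqP.
Qed.

Definition Sset t v (a : 'I_(nC t v)) (s : 'I_(2 * t).+1) : {set 'I_(nC t v)} :=
  [set ordm t v (a + hoff t v s); ordm t v (a + poff t v s)].
Arguments Sset : clear implicits.

Lemma ordm0 t v (a : 'I_(nC t v)) : ordm t v (a + 0) = a.
Proof. by apply: val_inj; rewrite /= addn0 modn_small. Qed.

Lemma Sset0 t v a : Sset t v a ord0 = [set a].
Proof.
rewrite /Sset /hoff /poff /= ordm0.
by apply/setP => x; rewrite !inE orbb.
Qed.

Lemma Sset2 t v a s : #|Sset t v a s| <= 2.
Proof. by rewrite /Sset cards2; case: (_ != _). Qed.

Lemma Sset_dis t v a (s s' : 'I_(2 * t).+1) : good_vector t v -> s != s' ->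
  [disjoint Sset t v a s & Sset t v a s'].
Proof.
move=> Hg ne.
have hs : s <= 2 * t by rewrite -ltnS.
have hs' : s' <= 2 * t by rewrite -ltnS.
have [l1 l2] := off_lt Hg hs; have [l1' l2'] := off_lt Hg hs'.
have [n1 n2 n3 n4] := off_ne Hg hs hs' ne.
rewrite -setI_eq0; apply/eqP/setP => x; rewrite !inE.
apply/negP => /andP[/orP[]/eqP-> /orP[]/eqP/(ordm_inj _ _)].
- by move=> /(_ l1 l1') /eqP; rewrite (negbTE n1).
- by move=> /(_ l1 l2') /eqP; rewrite (negbTE n2).
- by move=> /(_ l2 l1') /eqP; rewrite (negbTE n3).
- by move=> /(_ l2 l2') /eqP; rewrite (negbTE n4).
Qed.

Lemma count_facts t k N (idx : 'I_k -> 'I_N) :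
  (0 < k)%N ->
  (forall D : nat, (1 <= D <= k)%N -> (2 * k <= 2 * t + D + ceil_div k D)%N) ->
  \sum_a #|[set j | idx j == a]| = k /\
  (2 * k <= (2 * t).+1.-1 + #|[set a | 0 < #|[set j | idx j == a]|]|
           + \max_a #|[set j | idx j == a]|)%N.
Proof.
move=> k0 HD.
pose cnt a := #|[set j | idx j == a]|.
have Hsum : \sum_a cnt a = k.
  rewrite (eq_bigr (fun a => \sum_j (idx j == a : nat))); last first.
    move=> a _; rewrite /cnt -sum1dep_card big_mkcond /=.
    by apply: eq_bigr => j _; case: (idx j == a).
  rewrite exchange_big /= -[RHS]card_ord -sum1_card.
  apply: eq_bigr => j _; rewrite (bigD1 (idx j)) //= eqxx big1 // => a.
  by rewrite eq_sym => /negbTE ->.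
split => //.
pose m := #|[set a | 0 < cnt a]|; pose r := \max_a cnt a.
have Hs2 : \sum_(a in [set a | 0 < cnt a]) cnt a = k.
  rewrite -Hsum [RHS](bigID (fun a => a \in [set a | 0 < cnt a])) /=.
  rewrite [X in _ = _ + X]big1 ?addn0 // => a; rewrite inE -eqn0Ngt.
  by move/eqP.
have kmr : (k <= m * r)%N.
  rewrite -Hs2 /m -sum_nat_const; apply: leq_sum => a _.
  exact: leq_bigmax.
have mk : (m <= k)%N.
  rewrite -Hs2 /m -sum1_card; apply: leq_sum => a; by rewrite inE.
have m1 : (1 <= m)%N.
  rewrite /m card_gt0; apply/set0Pn; exists (idx (Ordinal k0)); rewrite inE.
  by rewrite /cnt card_gt0; apply/set0Pn; exists (Ordinal k0); rewrite inE.
have h := HD m (ltac:(lia)).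
have hc : (ceil_div k m <= r)%N.
  rewrite /ceil_div -ltnS ltn_divLR; last by lia.
  have -> : (r.+1 * m = m * r + m)%N by rewrite mulSn addnC mulnC.
  move: kmr; move: (m * r)%N => mr kmr; lia.
rewrite /= -/cnt -/m -/r.
move: h hc kmr mk m1; move: (ceil_div k m) (m * r)%N => c mr; lia.
Qed.

Local Open Scope ring_scope.

Lemma xat_val (F : fieldType) n (x : 'rV[F]_n) (z : int) (o : 'I_n) :
  val o = `|(z %% n%:Z)%Z|%N -> xat x z = x 0 o.
Proof.
rewrite /xat => <-; rewrite (nth_map o) ?size_enum_ord ?ltn_ord //.
by congr (x 0 _); apply: val_inj; rewrite /= nth_enum_ord.
Qed.

Lemma xat_mod (F : fieldType) n (x : 'rV[F]_n) (z : int) (m : nat) (o : 'I_n) :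
  (n%:Z %| z - m%:Z)%Z -> val o = (m %% n)%N -> xat x z = x 0 o.
Proof.
move=> d vo; apply: xat_val; rewrite vo.
have -> : (z %% n = m %% n)%Z by apply/eqP; rewrite eqz_mod_dvd.
by rewrite modz_nat.
Qed.

Lemma xat_lin (F : fieldType) n (x y : 'rV[F]_n) (c : F) (z : int) :
  xat (c *: x + y) z = c * xat x z + xat y z.
Proof.
rewrite /xat; set i := `|_|%N.
case: (ltnP i n) => h.
  rewrite !(nth_map (Ordinal h)); first by rewrite !mxE.
  all: first [by rewrite size_enum_ord | by move: (size_enum_ord n); rewrite enumT => -> | idtac].
  by rewrite !nth_default ?size_map -?enumT ?size_enum_ord // mulr0 addr0.
Qed.

Lemma yC_rec (F : fieldType) t v (x : 'rV[F]_(nC t v)) (a : 'I_(nC t v)) (s : nat) :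
  good_vector t v -> (1 <= s <= 2 * t)%N ->
  yC x (ordm t v (a + hoff t v s)) (jj s) = x 0 a + x 0 (ordm t v (a + poff t v s)).
Proof.
move=> Hg hs.
have jb : (1 <= jj s <= t)%N by rewrite /jj; lia.
have [f1 f2 _ _] := jpos_facts Hg jb.
rewrite /yC /hoff /poff.
have -> : (s == 0%N) = false by lia.
set j := jj s in jb f1 f2 *; set jp := jpos v j in f1 f2 *.
set n := nC t v.
case: ifP => _.
  set M := (a + (t + jp))%N; have E := divn_eq M n.
  rewrite (@xat_mod _ _ x _ a a) ?modn_small //; last first.
    apply/dvdzP; exists (- (M %/ n)%N%:Z); rewrite /=.
    move: E; rewrite /M; move: (_ %/ _)%N (_ %% _)%N => q r E; lia.
  rewrite (@xat_mod _ _ x _ (a + j)%N (ordm t v (a + j))) //.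
  apply/dvdzP; exists (- (M %/ n)%N%:Z); rewrite /=.
  move: E; rewrite /M; move: (_ %/ _)%N (_ %% _)%N => q r E; lia.
set M := (a + (t + jp - j))%N; have E := divn_eq M n.
have nb : (j < n)%N by rewrite /n nC_size //; lia.
rewrite addrC (@xat_mod _ _ x _ a a) ?modn_small //; last first.
  apply/dvdzP; exists (- (M %/ n)%N%:Z); rewrite /=.
  move: E; rewrite /M; move: (_ %/ _)%N (_ %% _)%N => q r E; lia.
rewrite (@xat_mod _ _ x _ (a + (n - j))%N (ordm t v (a + (n - j)))) //.
apply/dvdzP; exists (- (M %/ n)%N%:Z - 1); rewrite /=.
move: E; rewrite /M; move: (_ %/ _)%N (_ %% _)%N => q r E; lia.
Qed.

Lemma sum_delta (F : fieldType) p (c : 'I_p) (w : 'I_p -> F) :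
  \sum_(s < p) (delta_mx 0 c : 'rV[F]_p) 0 s * w s = w c.
Proof.
rewrite (bigD1 c) //= big1 ?addr0; first by rewrite mxE !eqxx /= mul1r.
by move=> s /negbTE ns; rewrite mxE ns andbF mul0r.
Qed.

Lemma sum_ndelta (F : fieldType) p (c : 'I_p) (w : 'I_p -> F) :
  \sum_(s < p) (- delta_mx 0 c : 'rV[F]_p) 0 s * w s = - w c.
Proof.
rewrite -sum_delta -sumrN; apply: eq_bigr => s _.
by rewrite mxE mulNr.
Qed.

Lemma lin_aux (F : fieldType) t v (c : F) (x y : 'rV[F]_(nC t v)) l :
  constructionC (c *: x + y) l = c *: constructionC x l + constructionC y l.
Proof.
apply/rowP => s; rewrite !mxE; case: eqP => _; first by rewrite ?mxE.
by rewrite /yC !xat_lin mulrDr addrACA.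
Qed.

Lemma req_aux (F : fieldType) t v k : good_vector t v -> (0 < k)%N ->
  (forall D : nat, (1 <= D <= k)%N -> (2 * k <= 2 * t + D + ceil_div k D)%N) ->
  forall idx : 'I_k -> 'I_(nC t v),
  exists part : 'I_(nC t v) -> 'I_k,
  exists f : 'I_(nC t v) -> 'rV[F]_t.+1,
  exists a : 'I_k -> 'I_(nC t v) -> F,
  forall (j : 'I_k) (x : 'rV[F]_(nC t v)),
    x 0 (idx j) = \sum_(l < nC t v | part l == j)
                     a j l * (\sum_(s < t.+1) f l 0 s * constructionC x l 0 s).
Proof.
move=> Hg k0 HD idx.
have [Hsum Hbd] := count_facts idx k0 HD.
have [Sel [Hc H0 Hd]] := @greedy _ _ (Sset t v) ord0 (fun a => Sset0 a) (fun a s => Sset2 a s)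
   (fun a s s' ne => Sset_dis a Hg ne) _ _ Hsum Hbd.
have [sel Hsel] := bridge ord0 Hc Hd.
pose j0 : 'I_k := Ordinal k0.
pose Sj j := Sset t v (idx j) (sel j).
pose pk l := [pick j | l \in Sj j].
have pkE j l : l \in Sj j -> pk l = Some j.
  move=> Hl; rewrite /pk; case: pickP => [j' Hj'|H]; last by rewrite H in Hl.
  congr Some; apply/eqP; apply: contraT => ne.
  have := Hsel _ _ ne => /disjointFr /(_ Hj'); by rewrite -/(Sj j) Hl.
pose hb j := ordm t v (idx j + hoff t v (sel j)).
pose pb j := ordm t v (idx j + poff t v (sel j)).
pose fv j l : 'rV[F]_t.+1 :=
  if sel j == ord0 then delta_mx 0 ord0
  else if l == hb j then delta_mx 0 (inord (jj (sel j))) else - delta_mx 0 ord0.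
exists (fun l => odflt j0 (pk l)).
exists (fun l => if pk l is Some j then fv j l else 0).
exists (fun j l => if l \in Sj j then 1 else 0).
move=> j x.
pose G l := \sum_(s < t.+1) fv j l 0 s * constructionC x l 0 s.
have -> : \sum_(l < nC t v | odflt j0 (pk l) == j)
    (if l \in Sj j then 1 else 0) *
    (\sum_(s < t.+1) (if pk l is Some j1 then fv j1 l else 0) 0 s
         * constructionC x l 0 s)
  = \sum_(l in Sj j) G l.
  rewrite big_mkcond [RHS]big_mkcond; apply: eq_bigr => l _.
  case: (boolP (l \in Sj j)) => Hl; first by rewrite (pkE j) //= eqxx mul1r.
  by rewrite mul0r; case: ifP.
have Cx0 l : constructionC x l 0 ord0 = x 0 l by rewrite mxE eqxx.
case: (eqVneq (sel j) ord0) => [E|nE].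
  rewrite /Sj E Sset0 big_set1 /G /fv E eqxx sum_delta; exact/esym/Cx0.
have hs : (1 <= sel j <= 2 * t)%N.
  have := ltn_ord (sel j); move: nE; rewrite -val_eqE /=; lia.
have hp : hb j != pb j.
  apply/eqP => /ordm_inj; have [l1 l2] := off_lt Hg (ltac:(lia) : (sel j <= 2 * t)%N).
  by move=> /(_ l1 l2) /eqP; rewrite (negbTE (off_hp Hg hs)).
have -> : Sj j = hb j |: [set pb j] by [].
rewrite big_setU1 ?inE // big_set1 /G /fv (negbTE nE) eqxx (_ : (pb j == hb j) = false); last by rewrite eq_sym (negbTE hp).
rewrite sum_delta sum_ndelta Cx0.
have jb : (jj (sel j) < t.+1)%N by rewrite /jj; lia.
rewrite mxE; case: eqP => [/(congr1 val)|_]; first by rewrite /= inordK //; rewrite /jj; lia.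
by rewrite inordK // yC_rec //; apply/esym; exact: addrK.
Qed.

Theorem theorem4p7_aux (F : finFieldType) (t : nat) (v : seq nat) (k : nat) :
  (0 < t)%N -> good_vector t v -> (0 < k)%N ->
  (forall D : nat, (1 <= D <= k)%N ->
     (2 * k <= 2 * t + D + ceil_div k D)%N) ->
  @is_BAC F (nC t v) ((t + 1) * nC t v)%N k (nC t v)
         (fun _ => t.+1) (@constructionC F t v).
Proof.
move=> t0 Hg k0 HD; split; first by [].
split; first by rewrite sum_nat_const card_ord mulnC addn1.
split; first by move=> c x y l; exact: lin_aux.
exact: req_aux.
Qed.

Local Close Scope ring_scope.

Theorem theorem4p7 (F : finFieldType) (t : nat) (v : seq nat) (k : nat) :
  (0 < t)%N -> good_vector t v -> (0 < k)%N ->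
  (forall D : nat, (1 <= D <= k)%N ->
     (2 * k <= 2 * t + D + ceil_div k D)%N) ->
  @is_BAC F (nC t v) ((t + 1) * nC t v) k (nC t v)
         (fun _ => t.+1) (@constructionC F t v).
Proof. exact: theorem4p7_aux. Qed.
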